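(* Let a memory system $M$ consist of one elementary system and an information system $I=I_1\cdots I_N$ of $N$ elementary systems, all with ontic coordinates in $\mathbb{Z}_d$ or all in $\mathbb{R}$; order the joint coordinates as $(q_M,p_M,q_{I_1},p_{I_1},\dots)$. Let the state of $I$ be an arbitrary valid epistemic state $(W,\vec w)$, with $W$ spanned by $\vec w_1,\dots,\vec w_k$. Let $S^M$ be a symplectic transformation of $I$ and $\vec f=((S^M)^T)^{-1}\vec q_1$, where $\vec q_1$ is the position observable of $I_1$; let $T$ be a symplectic transformation of $M$ and $\vec v=(T^T)^{-1}\vec q$, where $\vec q$ is the position observable of $M$. Let the memory initially be in the state where the value of $\vec v$ is $0$, so the total initial state is $\big(\langle(\vec v,0,\dots,0)^T,(0,0,\vec w_1)^T,\dots,(0,0,\vec w_k)^T\rangle,(0,0,\vec w)^T\big)$. Let $\Phi$ be the symplectic transformation acting on $M$ and $I_1$ (identity on $I_2,\dots,I_N$) by $(q_{I_1},p_{I_1},q_M,p_M)\mapsto(q_{I_1},\,p_{I_1}-p_M,\,q_M+q_{I_1},\,p_M)$. Then the transformation $$\Gamma=(T\oplus\mathbb{1}_I)(\mathbb{1}_M\oplus S^M)\,\Phi\,(\mathbb{1}_M\oplus (S^M)^{-1})(T^{-1}\oplus\mathbb{1}_I)$$ correlates the value of $\vec v$ on the memory with the value of $\vec f$ on the information system: in the final state, every compatible ontic state $\vec m=(\vec m_M,\vec m_I)$ satisfies $\vec v^T\vec m_M=\vec f^T\vec m_I$. Moreover, if $d$ is prime or the systems are continuous, the marginal of the final state on $I$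 (tracing out the memory) is the mixture of the post-measurement states corresponding to all possible outcomes (those with nonzero probability) of a measurement of $\vec f$ (i.e. of $V_\pi=\langle\vec f\rangle$) on $(W,\vec w)$.
   Context: Toy theory (quadrature formalism): ontic states $\vec m\in\Omega=\mathbb{Z}_d^{2n}$ or $\mathbb{R}^{2n}$, coordinates $(q_1,p_1,\dots,q_n,p_n)$; an observable $\vec f\in\Omega$ takes value $\vec f^T\vec m$; the position observable of the $i$-th elementary system is the vector with a 1 in coordinate $q_i$ and zeros elsewhere. Poisson bracket $[\vec f,\vec g]=\sum_i(f_{2i-1}g_{2i}-f_{2i}g_{2i-1})$; a matrix is symplectic if it preserves this bracket. A valid epistemic state $(V,\vec v)$ has $V$ an isotropic subspace/submodule ($[\vec f,\vec g]=0$ on $V$); compatible ontic states are $V^\perp+\vec v$ ($V^\perp=\{\vec m:\vec f^T\vec m=0\ \forall\vec f\in V\}$), uniformly distributed. A symplectic $\Gamma$ acts by $\vec m\mapsto\Gamma\vec m$ and $(V,\vec v)\mapsto((\Gamma^T)^{-1}V,\Gamma\vec v)$. Tracing out a subsystem = marginalizing the uniform distribution. A measurement is an isotropic $V_\pi$, outcome $\vec v_\pi$ = cell $V_\pi^\perp+\vec v_\pi$; post-measurement state: $(V_\pi+V_{\text{commute}},\vec v')$ with $V_{\text{commute}}=\{\vec f\in V:[\vec f,\vec g]=0\ \forall \vec g\in V_\pi\}$ and $\vec v'\in(V_\pi^\perp+\vec v_\pi)\cap(V_{\text{commute}}^\perp+\vec v)$. A mixture of epistemic states is the uniform distribution on the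 union of their compatible ontic sets. *)

(* Defs.v *)
(* Ontic states of n elementary systems are column vectors of length 2n; the
   coordinates (q_1,p_1,...,q_n,p_n) are stored at 0-based indices
   (0,1,...,2n-2,2n-1), i.e. q_(i+1) is at index 2i and p_(i+1) at index 2i+1. *)
From HB Require Import structures.
From mathcomp Require Import all_boot all_order all_algebra.
From mathcomp Require Import reals.
Set Implicit Arguments. Unset Strict Implicit. Unset Printing Implicit Defensive.
Import Order.TTheory GRing.Theory Num.Theory.
Local Open Scope ring_scope.

Section Toy.
Variable K : comUnitRingType.

Definition dot m (f x : 'cV[K]_m) : K := (f^T *m x) 0 0.

(* Poisson bracket  [f,g] = sum_i (f_{q_i} g_{p_i} - f_{p_i} g_{q_i}) = f^T J g *)
Definition Jmx m : 'M[K]_m :=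
  \matrix_(i < m, j < m)
    ((~~ odd i && (j == i.+1 :> nat))%:R - (odd i && (i == j.+1 :> nat))%:R).
Definition pb m (f g : 'cV[K]_m) : K := (f^T *m Jmx m *m g) 0 0.

Definition symplectic m (G : 'M[K]_m) : Prop :=
  forall f g : 'cV[K]_m, pb (G *m f) (G *m g) = pb f g.

(* position observable of the (i+1)-th elementary system (0-based i) *)
Definition qpos m (i : nat) : 'cV[K]_m := \col_(j < m) (j == (2 * i)%N :> nat)%:R.

Definition gspan m (gs : seq 'cV[K]_m) : 'cV[K]_m -> Prop :=
  fun f => exists c : 'I_(size gs) -> K, f = \sum_(i < size gs) c i *: gs`_i.
Definition isotropic m (V : 'cV[K]_m -> Prop) : Prop :=
  forall f g, V f -> V g -> pb f g = 0.
Definition perp m (V : 'cV[K]_m -> Prop) : 'cV[K]_m -> Prop :=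
  fun x => forall f, V f -> dot f x = 0.
Definition sumsp m (V1 V2 : 'cV[K]_m -> Prop) : 'cV[K]_m -> Prop :=
  fun g => exists a b, V1 a /\ V2 b /\ g = a + b.

Definition compat m (V : 'cV[K]_m -> Prop) (v x : 'cV[K]_m) : Prop :=
  exists u, perp V u /\ x = u + v.

Definition act_sp m (G : 'M[K]_m) (V : 'cV[K]_m -> Prop) : 'cV[K]_m -> Prop :=
  fun g => exists f, V f /\ g = invmx G^T *m f.
Definition act_vec m (G : 'M[K]_m) (v : 'cV[K]_m) : 'cV[K]_m := G *m v.

Definition vcommute m (V Vpi : 'cV[K]_m -> Prop) : 'cV[K]_m -> Prop :=
  fun g => V g /\ forall h, Vpi h -> pb g h = 0.
(* outcome vpi has nonzero probability: its cell meets the compatible set *)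
Definition possible_outcome m (V : 'cV[K]_m -> Prop) (v : 'cV[K]_m)
  (Vpi : 'cV[K]_m -> Prop) (vpi : 'cV[K]_m) : Prop :=
  exists x, compat Vpi vpi x /\ compat V v x.
Definition post_meas m (V : 'cV[K]_m -> Prop) (v : 'cV[K]_m)
  (Vpi : 'cV[K]_m -> Prop) (vpi : 'cV[K]_m) : 'cV[K]_m -> Prop :=
  fun x => exists v', compat Vpi vpi v' /\ compat (vcommute V Vpi) v v' /\
                      compat (sumsp Vpi (vcommute V Vpi)) v' x.
(* mixture (support = union of compatible sets) of all post-measurement
   states over the possible outcomes *)
Definition meas_mixture m (V : 'cV[K]_m -> Prop) (v : 'cV[K]_m)
  (Vpi : 'cV[K]_m -> Prop) : 'cV[K]_m -> Prop :=
  fun x => exists vpi, possible_outcome V v Vpi vpi /\ post_meas V v Vpi vpi x.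

(* the map Phi on (M, I_1): q_M' = q_M + q_I1, p_I1' = p_I1 - p_M;
   joint coordinates (q_M,p_M,q_I1,p_I1,...) at indices 0,1,2,3,... *)
Definition Phi m : 'M[K]_m :=
  \matrix_(i < m, j < m)
    ((i == j :> nat)%:R + ((i == 0%N :> nat) && (j == 2%N :> nat))%:R
       - ((i == 3%N :> nat) && (j == 1%N :> nat))%:R).

Definition dsum_M N (T : 'M[K]_2) : 'M[K]_(2 + 2 * N) := block_mx T 0 0 1%:M.
Definition dsum_I N (S : 'M[K]_(2 * N)) : 'M[K]_(2 + 2 * N) := block_mx 1%:M 0 0 S.

Definition Gamma5 N (T : 'M[K]_2) (S : 'M[K]_(2 * N)) : 'M[K]_(2 + 2 * N) :=
  dsum_M N T *m dsum_I S *m Phi (2 + 2 * N) *m dsum_I (invmx S) *m dsum_M N (invmx T).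

Definition v_obs (T : 'M[K]_2) : 'cV[K]_2 := invmx T^T *m qpos 2 0.
Definition f_obs N (S : 'M[K]_(2 * N)) : 'cV[K]_(2 * N) := invmx S^T *m qpos (2 * N) 0.

Definition init_sp N (T : 'M[K]_2) (ws : seq 'cV[K]_(2 * N)) : 'cV[K]_(2 + 2 * N) -> Prop :=
  gspan (col_mx (v_obs T) 0 :: map (fun wi => col_mx 0 wi) ws).
Definition init_vec N (w : 'cV[K]_(2 * N)) : 'cV[K]_(2 + 2 * N) := col_mx 0 w.

Definition final_compat N (T : 'M[K]_2) (S : 'M[K]_(2 * N))
  (ws : seq 'cV[K]_(2 * N)) (w : 'cV[K]_(2 * N)) : 'cV[K]_(2 + 2 * N) -> Prop :=
  compat (act_sp (Gamma5 T S) (init_sp T ws)) (act_vec (Gamma5 T S) (init_vec w)).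

(* marginal on I (tracing out the memory): support of the marginal *)
Definition marginal_I N (C : 'cV[K]_(2 + 2 * N) -> Prop) : 'cV[K]_(2 * N) -> Prop :=
  fun mI => exists mM : 'cV[K]_2, C (col_mx mM mI).

Definition correlates N (T : 'M[K]_2) (S : 'M[K]_(2 * N))
  (ws : seq 'cV[K]_(2 * N)) (w : 'cV[K]_(2 * N)) : Prop :=
  forall x, final_compat T S ws w x ->
    dot (v_obs T) (usubmx x) = dot (f_obs S) (dsubmx x).

Definition marginal_is_mixture N (T : 'M[K]_2) (S : 'M[K]_(2 * N))
  (ws : seq 'cV[K]_(2 * N)) (w : 'cV[K]_(2 * N)) : Prop :=
  forall mI, marginal_I (final_compat T S ws w) mI <->
             meas_mixture (gspan ws) w (gspan [:: f_obs S]) mI.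

End Toy.

(* Main.v *)
Require Import Defs.
From HB Require Import structures.
From mathcomp Require Import all_boot all_order all_algebra.
From mathcomp Require Import reals.
From mathcomp Require Import ring zify.
From Stdlib Require Import Classical.
Set Implicit Arguments. Unset Strict Implicit. Unset Printing Implicit Defensive.
Import Order.TTheory GRing.Theory Num.Theory.
Local Open Scope ring_scope.

Section Gen.
Variable K : comUnitRingType.

Definition ev m k : 'cV[K]_m := \col_(j < m) ((j : nat) == k)%:R.

Lemma ev_delta m k (hk : (k < m)%N) : ev m k = delta_mx (Ordinal hk) 0.
Proof. by apply/matrixP => i j; rewrite !mxE (ord1 j) eqxx andbT. Qed.

Lemma dotC m (f x : 'cV[K]_m) : dot f x = dot x f.
Proof. by rewrite /dot -[x^T *m f]trmxK trmx_mul trmxK [in RHS]mxE. Qed.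

Lemma dotDr m (f x y : 'cV[K]_m) : dot f (x + y) = dot f x + dot f y.
Proof. by rewrite /dot mulmxDr mxE. Qed.
Lemma dotZr m (f x : 'cV[K]_m) a : dot f (a *: x) = a * dot f x.
Proof. by rewrite /dot -scalemxAr mxE. Qed.
Lemma dotNr m (f x : 'cV[K]_m) : dot f (- x) = - dot f x.
Proof. by rewrite /dot mulmxN mxE. Qed.
Lemma dotBr m (f x y : 'cV[K]_m) : dot f (x - y) = dot f x - dot f y.
Proof. by rewrite dotDr dotNr. Qed.
Lemma dot0r m (f : 'cV[K]_m) : dot f 0 = 0.
Proof. by rewrite /dot mulmx0 mxE. Qed.
Lemma dotDl m (f g x : 'cV[K]_m) : dot (f + g) x = dot f x + dot g x.
Proof. by rewrite dotC dotDr !(dotC x). Qed.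
Lemma dotZl m (f x : 'cV[K]_m) a : dot (a *: f) x = a * dot f x.
Proof. by rewrite dotC dotZr dotC. Qed.
Lemma dotNl m (f x : 'cV[K]_m) : dot (- f) x = - dot f x.
Proof. by rewrite dotC dotNr dotC. Qed.
Lemma dotBl m (f g x : 'cV[K]_m) : dot (f - g) x = dot f x - dot g x.
Proof. by rewrite dotDl dotNl. Qed.
Lemma dot0l m (f : 'cV[K]_m) : dot 0 f = 0.
Proof. by rewrite dotC dot0r. Qed.
Lemma dot_mul m n (f : 'cV[K]_m) (A : 'M_(m, n)) x : dot f (A *m x) = dot (A^T *m f) x.
Proof. by rewrite /dot trmx_mul trmxK mulmxA. Qed.
Lemma dot_col m n (a c : 'cV[K]_m) (b d : 'cV[K]_n) :
  dot (col_mx a b) (col_mx c d) = dot a c + dot b d.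
Proof. by rewrite /dot tr_col_mx mul_row_col mxE. Qed.
Lemma pbE m (f g : 'cV[K]_m) : pb f g = dot f (Jmx K m *m g).
Proof. by rewrite /pb /dot mulmxA. Qed.

Lemma outer_mul m n (u : 'cV[K]_m) (v z : 'cV[K]_n) : u *m v^T *m z = dot v z *: u.
Proof. by rewrite -mulmxA [v^T *m z]mx11_scalar mul_mx_scalar. Qed.

Lemma dot_ev_neq m i j : i != j -> dot (ev m i) (ev m j) = 0.
Proof.
move=> hij; rewrite /dot mxE big1 // => k _; rewrite !mxE.
have [->|_] := eqVneq (k : nat) i; last by rewrite mul0r.
by rewrite (negbTE hij) mulr0.
Qed.
Lemma dot_ev_eq m i : (i < m)%N -> dot (ev m i) (ev m i) = 1.
Proof.
move=> hi; rewrite (ev_delta hi) /dot trmx_delta mul_delta_mx mxE !eqxx //.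
Qed.

Lemma gspan_mem m (gs : seq 'cV[K]_m) g : g \in gs -> gspan gs g.
Proof.
move=> hg; have hi : (index g gs < size gs)%N by rewrite index_mem.
exists (fun i => ((i : nat) == index g gs)%:R).
rewrite (bigD1 (Ordinal hi)) //= eqxx scale1r nth_index // big1 ?addr0 // => i hi'.
by rewrite -(inj_eq val_inj) /= in hi'; rewrite (negbTE hi') scale0r.
Qed.

Lemma gspan_lin m (gs : seq 'cV[K]_m) a b f g :
  gspan gs f -> gspan gs g -> gspan gs (a *: f + b *: g).
Proof.
move=> [c ->] [c' ->]; exists (fun i => a * c i + b * c' i).
rewrite !scaler_sumr -big_split /=; apply: eq_bigr => i _.
by rewrite scalerDl !scalerA.
Qed.

Lemma perp_gspan m (gs : seq 'cV[K]_m) u :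
  perp (gspan gs) u <-> (forall g, g \in gs -> dot g u = 0).
Proof.
split=> [h g hg|h f [c ->]]; first by apply: h; apply: gspan_mem.
rewrite dotC /dot mulmx_sumr summxE big1 // => i _.
rewrite -scalemxAr mxE; have := h (gs`_i) (mem_nth 0 (ltn_ord i)).
by rewrite dotC /dot => ->; rewrite mulr0.
Qed.


Lemma Jentry m (i j : 'I_m) :
  Jmx K m i j = if odd i then - ((j : nat) == i.-1)%:R else ((j : nat) == i.+1)%:R.
Proof.
rewrite mxE; case ho: (odd i) => /=; last by rewrite subr0.
rewrite sub0r; move: ho; case: (nat_of_ord i) => [|i'] //= _.
by rewrite eqSS eq_sym.
Qed.

Lemma JJ m : ~~ odd m -> Jmx K m *m Jmx K m = - 1%:M.
Proof.
move=> hm; apply/matrixP => i k; rewrite !mxE.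
pose p := if odd i then (i : nat).-1 else (i : nat).+1.
have hp : (p < m)%N.
  rewrite /p; case hi: (odd i).
    by apply: leq_ltn_trans (ltn_ord i); apply: leq_pred.
  have := ltn_ord i; rewrite leq_eqVlt => /orP [/eqP hE|//].
  have : odd m by rewrite -hE /= hi.
  by rewrite (negbTE hm).
have hp' (j : 'I_m) : Jmx K m i j = (if odd i then -1 else 1) * ((j : nat) == p)%:R.
  by rewrite Jentry /p; case: (odd i); rewrite ?mulN1r ?mul1r.
rewrite (bigD1 (Ordinal hp)) //= big1 ?addr0; last first.
  move=> j hj; rewrite hp'.
  have hj' : ((j : nat) == p) = false.
    by apply/negbTE; apply: contra hj => /eqP hj; apply/eqP; apply: val_inj.
  by rewrite hj' mulr0 mul0r.
rewrite hp' eqxx mulr1 Jentry /=.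
have -> : (i == k) = ((i : nat) == k) by [].
rewrite /p; move: (nat_of_ord i) (nat_of_ord k) => a b.
case ha: (odd a).
  case: a ha => [|a] //= ha.
  by rewrite (negbTE ha) mulN1r eq_sym.
by rewrite /= ha mul1r eq_sym.
Qed.

End Gen.

Section G2.
Variable K : comUnitRingType.
Lemma delta_entry m (A : 'M[K]_m) (i j : 'I_m) :
  ((delta_mx i 0 : 'cV[K]_m)^T *m A *m (delta_mx j 0 : 'cV[K]_m)) 0 0 = A i j.
Proof. rewrite trmx_delta -rowE -colE. by rewrite !mxE. Qed.
Lemma sympl_mx m (G : 'M[K]_m) : symplectic G -> G^T *m Jmx K m *m G = Jmx K m.
Proof.
move=> hG; apply/matrixP => i j.
rewrite -[LHS]delta_entry -[RHS]delta_entry.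
have := hG (delta_mx i 0) (delta_mx j 0); rewrite /pb trmx_mul !mulmxA => <-.
by [].
Qed.
Lemma sympl_unit m (G : 'M[K]_m) : ~~ odd m -> symplectic G -> G \in unitmx.
Proof.
move=> hm hG.
have h : (- (Jmx K m *m G^T *m Jmx K m)) *m G = 1%:M.
  by rewrite mulNmx -!mulmxA (mulmxA G^T) sympl_mx // JJ // opprK.
by have [] := mulmx1_unit h.
Qed.

Lemma sympl_JinvT m (S : 'M[K]_m) : ~~ odd m -> symplectic S ->
  Jmx K m *m invmx S^T = S *m Jmx K m.
Proof.
move=> hm hS; have hu : S^T \in unitmx by rewrite unitmx_tr sympl_unit.
have h1 : Jmx K m *m S = invmx S^T *m Jmx K m.
  by rewrite -{2}(sympl_mx hS) !mulmxA mulVmx // mul1mx.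
have h2 : Jmx K m *m S *m Jmx K m = - invmx S^T.
  by rewrite h1 -mulmxA JJ // mulmxN mulmx1.
by rewrite -[invmx S^T]opprK -h2 mulmxN !mulmxA JJ // !mulNmx mul1mx opprK.
Qed.
End G2.

Section G3.
Variable K : comUnitRingType.
Variable N : nat.
Definition Bm : 'M[K]_(2, 2 * N) := ev K 2 0 *m (ev K (2 * N) 0)^T.
Definition Cm : 'M[K]_(2 * N, 2) := - (ev K (2 * N) 1 *m (ev K 2 1)^T).

Lemma e2n k : ((2 + k)%N == 2%N) = (k == 0%N). Proof. by case: k. Qed.
Lemma e3n k : ((2 + k)%N == 3%N) = (k == 1%N). Proof. by case: k => [|[|k]]. Qed.
Lemma e1n k : ((2 + k)%N == 1%N) = false. Proof. by []. Qed.
Lemma e0n k : ((2 + k)%N == 0%N) = false. Proof. by []. Qed.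

Lemma ean k l : ((2 + k)%N == (2 + l)%N) = (k == l). Proof. exact: eqn_add2l. Qed.

Lemma Phi_block : Phi K (2 + 2 * N) = block_mx 1%:M Bm Cm 1%:M.
Proof.
apply/matrixP => i j; rewrite [LHS]mxE.
case: (split_ordP i) => i1 ->; case: (split_ordP j) => j1 ->;
  rewrite ?block_mxEul ?block_mxEur ?block_mxEdl ?block_mxEdr !mxE ?big_ord1 ?mxE /=.
- move: (ltn_ord i1) (ltn_ord j1); case: i1 j1 => [[|[|a]] ?] [[|[|b]] ?] //=;
    by rewrite ?addr0 ?subr0.
- move: (ltn_ord i1); case: i1 => [[|[|a]] ?] //= _;
    rewrite ?e2n ?e1n ?e0n /= ?add0r ?mul1r ?mul0r ?addr0 ?subr0 ?oppr0 //.
- move: (ltn_ord j1); case: j1 => [[|[|a]] ?] //= _;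
    rewrite ?e2n ?e3n ?e1n ?e0n /= ?add0r ?mul1r ?mul0r ?mulr1 ?mulr0 ?addr0 ?subr0 ?oppr0 //.
  + by case: (nat_of_ord i1 == 1%N); rewrite /= ?oppr0.
  + by case: (nat_of_ord i1 == 1%N).
- by rewrite ean e3n e1n andbF subr0 addr0.
Qed.
Lemma BC : Bm *m Cm = 0.
Proof. by rewrite /Bm /Cm mulmxN mulmxA outer_mul dot_ev_neq // scale0r mul0mx oppr0. Qed.
Lemma CB : Cm *m Bm = 0.
Proof. by rewrite /Bm /Cm mulNmx mulmxA outer_mul dot_ev_neq // scale0r mul0mx oppr0. Qed.

Lemma Phi_unit : Phi K (2 + 2 * N) \in unitmx.
Proof.
rewrite Phi_block.
have h : block_mx 1%:M Bm Cm 1%:M *m block_mx 1%:M (- Bm) (- Cm) 1%:M = 1%:M.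
  rewrite mulmx_block (mulmxN Bm Cm) (mulmxN Cm Bm) BC CB !mul1mx !mulmx1 !oppr0.
  by rewrite addr0 add0r addNr subrr scalar_mx_block.
by have [] := mulmx1_unit h.
Qed.

Variables (S : 'M[K]_(2 * N)) (T : 'M[K]_2).
Hypotheses (hS : S \in unitmx) (hT : T \in unitmx).

Lemma Gamma_col (yM : 'cV[K]_2) (yI : 'cV[K]_(2 * N)) : Gamma5 T S *m col_mx yM yI =
  col_mx (yM + T *m (Bm *m (invmx S *m yI))) (S *m (Cm *m (invmx T *m yM)) + yI).
Proof.
rewrite /Gamma5 /dsum_M /dsum_I Phi_block -!mulmxA.
rewrite !mul_block_col !mul1mx !mul0mx !addr0 !add0r.
rewrite !mulmxDr !mulKVmx //.
by rewrite /Bm !mulmxA.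
Qed.

Lemma Gamma_unit : Gamma5 T S \in unitmx.
Proof.
rewrite /Gamma5 /dsum_M /dsum_I !unitmx_mul !block_diag_mx_unit !unitmx1 !unitmx_inv hS hT.
by rewrite Phi_unit.
Qed.
End G3.


Section G4.
Variable K : comUnitRingType.

Lemma qpos0 m : qpos K m 0 = ev K m 0.
Proof. by []. Qed.

Lemma gspan0 m (gs : seq 'cV[K]_m) : gspan gs 0.
Proof. by exists (fun _ => 0); rewrite big1 // => i _; rewrite scale0r. Qed.

Lemma gspan1 m (f g : 'cV[K]_m) : gspan [:: f] g -> exists c, g = c *: f.
Proof. by move=> [c ->]; exists (c ord0); rewrite big_ord1. Qed.

Lemma pbZr m (g f : 'cV[K]_m) c : pb g (c *: f) = c * pb g f.
Proof. by rewrite !pbE -scalemxAr dotZr. Qed.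

Lemma pb_lin m (f g h : 'cV[K]_m) a b : pb (a *: f + b *: g) h = a * pb f h + b * pb g h.
Proof. by rewrite !pbE dotDl !dotZl. Qed.

Lemma J_ev0 m : (1 < m)%N -> Jmx K m *m ev K m 0 = - ev K m 1.
Proof.
move=> hm; have h0 : (0 < m)%N by apply: ltn_trans hm.
rewrite (ev_delta _ h0) -colE; apply/matrixP => i j; rewrite mxE Jentry !mxE /=.
case hi: (odd i); last first.
  have -> : ((i : nat) == 1%N) = false by apply/negbTE; apply: contraFN hi => /eqP ->.
  by rewrite oppr0.
by move: hi; case: (nat_of_ord i) => [|a] //= _; rewrite eqSS eq_sym.
Qed.


Variables (N : nat) (ws : seq 'cV[K]_(2 * N)) (w : 'cV[K]_(2 * N))
  (S : 'M[K]_(2 * N)) (T : 'M[K]_2).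
Hypotheses (hN : (0 < N)%N) (hS : symplectic S) (hT : symplectic T).

Lemma even2N : ~~ odd (2 * N). Proof. by rewrite mul2n odd_double. Qed.
Lemma hSu : S \in unitmx. Proof. exact: sympl_unit even2N hS. Qed.
Lemma hTu : T \in unitmx. Proof. exact: sympl_unit _ hT. Qed.
Lemma hGu : Gamma5 T S \in unitmx. Proof. exact: Gamma_unit hSu hTu. Qed.

Lemma final_iff x : final_compat T S ws w x <->
  exists yM yI, dot (v_obs T) yM = 0 /\ perp (gspan ws) (yI - w) /\
                x = Gamma5 T S *m col_mx yM yI.
Proof.
have hGt : (Gamma5 T S)^T \in unitmx by rewrite unitmx_tr hGu.
split.
- move=> [u [hu ->]].
  set u' := invmx (Gamma5 T S) *m u.
  have hu' : perp (init_sp T ws) u'.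
    move=> f hf; rewrite /u' dot_mul trmx_inv; apply: hu; by exists f.
  move: hu'; rewrite /init_sp perp_gspan => hu'.
  have eu : u' = col_mx (usubmx u') (dsubmx u') by rewrite vsubmxK.
  exists (usubmx u'), (dsubmx u' + w); split; [|split].
  + have := hu' _ (mem_head _ _); rewrite {1}eu dot_col dot0l addr0 => ->; done.
  + rewrite addrK perp_gspan => g hg.
    have := hu' (col_mx 0 g); rewrite {1}eu dot_col dot0l add0r; apply.
    by rewrite in_cons; apply/orP; right; apply/mapP; exists g.
  + rewrite /act_vec /init_vec.
    rewrite -[usubmx u']addr0 -add_col_mx -eu mulmxDr /u' mulKVmx //.
    exact: hGu.
- move=> [yM [yI [h1 [h2 ->]]]].
  exists (Gamma5 T S *m col_mx yM (yI - w)); split.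
    move=> g [f [hf ->]]; rewrite dot_mul mulKVmx //.
    move: hf; rewrite /init_sp => [[c ->]].
    rewrite dotC /dot mulmx_sumr summxE big1 // => i _.
    rewrite -scalemxAr mxE.
    have : dot (col_mx yM (yI - w)) ((col_mx (v_obs T) 0 :: [seq col_mx 0 wi | wi <- ws])`_i) = 0.
      have := mem_nth 0 (ltn_ord i); move: (_`_i) => g'; rewrite in_cons => /orP [/eqP ->|].
        by rewrite dotC dot_col dot0l addr0.
      move/mapP => [wi hwi ->]; rewrite dotC dot_col dot0l add0r.
      by apply: h2; apply: gspan_mem.
    by rewrite /dot => ->; rewrite mulr0.
  rewrite /act_vec /init_vec -mulmxDr add_col_mx addr0 subrK //.
Qed.

Lemma TTv : T^T *m v_obs T = ev K 2 0.
Proof. by rewrite /v_obs mulKVmx // unitmx_tr hTu. Qed.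
Lemma STf : S^T *m f_obs S = ev K (2 * N) 0.
Proof. by rewrite /f_obs mulKVmx // unitmx_tr hSu. Qed.

Lemma dsub_Gamma yM yI :
  dsubmx (Gamma5 T S *m col_mx yM yI) = yI - dot (ev K 2 1) (invmx T *m yM) *: (S *m ev K (2 * N) 1).
Proof.
rewrite Gamma_col ?hSu ?hTu // col_mxKd /Cm mulNmx mulmxN outer_mul -scalemxAr.
by rewrite addrC.
Qed.

Lemma usub_dot yM yI :
  dot (v_obs T) (usubmx (Gamma5 T S *m col_mx yM yI)) = dot (v_obs T) yM + dot (f_obs S) yI.
Proof.
rewrite Gamma_col ?hSu ?hTu // col_mxKu dotDr dot_mul TTv dot_mul /Bm trmx_mul trmxK.
rewrite outer_mul dot_ev_eq // scale1r dot_mul trmx_inv //.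
Qed.

Lemma dsub_dot yM yI :
  dot (f_obs S) (dsubmx (Gamma5 T S *m col_mx yM yI)) = dot (f_obs S) yI.
Proof.
rewrite dsub_Gamma dotBr dotZr dot_mul STf dot_ev_neq // mulr0 subr0 //.
Qed.

Lemma corr : correlates T S ws w.
Proof.
move=> x /final_iff [yM [yI [h1 [_ ->]]]].
by rewrite usub_dot dsub_dot h1 add0r.
Qed.

Definition hv := S *m ev K (2 * N) 1.

Lemma dot_h g : dot g hv = - pb g (f_obs S).
Proof.
have h1 : (1 < 2 * N)%N by move: hN; clear; lia.
rewrite pbE /f_obs qpos0 mulmxA sympl_JinvT ?even2N // -mulmxA J_ev0 //.
by rewrite mulmxN dotNr opprK.
Qed.

Lemma dot_fh : dot (f_obs S) hv = 0.
Proof. by rewrite /hv dot_mul STf dot_ev_neq. Qed.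

Lemma key_field (hF : forall x : K, x != 0 -> x \is a GRing.unit) z0 :
  (forall g, gspan ws g -> pb g (f_obs S) = 0 -> dot g z0 = 0) ->
  exists t, perp (gspan ws) (z0 - t *: hv).
Proof.
move=> hz.
have E t g : dot g (z0 - t *: hv) = dot g z0 + t * pb g (f_obs S).
  by rewrite dotBr dotZr dot_h mulrN opprK.
case: (classic (exists g0, gspan ws g0 /\ pb g0 (f_obs S) != 0)).
- move=> [g0 [hg0 hp0]].
  have hu := hF _ hp0.
  exists (- dot g0 z0 / pb g0 (f_obs S)) => g hg; rewrite E.
  set a := pb g0 (f_obs S); set b := pb g (f_obs S).
  have hg' := gspan_lin a (- b) hg hg0.
  have := hz _ hg'; rewrite pb_lin -/a -/b mulrC mulNr addrN => /(_ erefl).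
  rewrite dotDl !dotZl => e.
  have e' : dot g z0 = a^-1 * (b * dot g0 z0).
    by apply: (mulrI hu); rewrite mulrA divrr // mul1r; move/eqP: e; rewrite mulNr subr_eq0 => /eqP.
  rewrite e'; ring.
- move=> hno; exists 0 => g hg; rewrite E.
  have hb : pb g (f_obs S) = 0.
    by apply/eqP; apply: negbNE; apply/negP => hne; apply: hno; exists g.
  by rewrite hz // mul0r addr0.
Qed.

Lemma marg (hF : forall x : K, x != 0 -> x \is a GRing.unit) :
  marginal_is_mixture T S ws w.
Proof.
move=> mI; split.
- move=> [mM /final_iff [yM [yI [h1 [h2 he]]]]].
  have emI : mI = yI - dot (ev K 2 1) (invmx T *m yM) *: hv.
    by rewrite -dsub_Gamma -he col_mxKd.
  move: emI; set t := dot _ _ => emI.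
  exists mI; split.
  + exists yI; split.
    * exists (t *: hv); split; last by rewrite emI addrC subrK.
      by apply/perp_gspan => g; rewrite inE => /eqP ->; rewrite dotZr dot_fh mulr0.
    * by exists (yI - w); split => //; rewrite subrK.
  + exists mI; split; [|split].
    * by exists 0; split; [move=> f _; rewrite dot0r | rewrite add0r].
    * exists (mI - w); split; last by rewrite subrK.
      move=> g [hg hc]; rewrite emI addrAC dotBr dotZr dot_h.
      rewrite (hc _ (gspan_mem (mem_head _ _))) oppr0 mulr0 subr0.
      exact: h2.
    * by exists 0; split; [move=> f _; rewrite dot0r | rewrite add0r].
- move=> [vpi [_ [v' [_ [[u2 [hu2 e2]] [u3 [hu3 e3]]]]]]].
  have hz : forall g, gspan ws g -> pb g (f_obs S) = 0 -> dot g (mI - w) = 0.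
    move=> g hg hp.
    have hvc : vcommute (gspan ws) (gspan [:: f_obs S]) g.
      by split=> // hh /gspan1 [c ->]; rewrite pbZr hp mulr0.
    rewrite e3 e2 addrA addrK dotDr (hu2 g hvc) (hu3 g) ?addr0 //.
    by exists 0, g; split; [apply: gspan0 | split => //; rewrite add0r].
  have [t ht] := key_field hF hz.
  set yM := T *m ((- t) *: ev K 2 1).
  set yI := w + (mI - w - t *: hv).
  exists (usubmx (Gamma5 T S *m col_mx yM yI)).
  apply/final_iff; exists yM, yI; split; [|split].
  + by rewrite dot_mul TTv dotZr dot_ev_neq // mulr0.
  + by rewrite /yI addrC addKr.
  + rewrite -[RHS]vsubmxK dsub_Gamma; congr col_mx.
    rewrite /yM mulKmx ?hTu // dotZr dot_ev_eq // mulr1 /yI scaleNr opprK.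
    by rewrite -addrA subrK addrC subrK.
Qed.
End G4.


Lemma Zp_field d : prime d -> forall x : 'Z_d, x != 0 -> x \is a GRing.unit.
Proof.
move=> hp x hx; have hd := prime_gt1 hp.
rewrite -[x]natr_Zp unitZpE // prime_coprime //.
have hx0 : (0 < x)%N by rewrite lt0n; apply: contra hx => /eqP h; apply/eqP/val_inj.
have hxd : (x < d)%N by move: (ltn_ord x); move: (nat_of_ord x) => k; rewrite Zp_cast.
by apply/negP => /(dvdn_leq hx0); rewrite leqNgt hxd.
Qed.

Theorem theorem5 :
  (* discrete case: coordinates in Z_d *)
  (forall (d N : nat) (ws : seq 'cV['Z_d]_(2 * N)) (w : 'cV['Z_d]_(2 * N))
          (S : 'M['Z_d]_(2 * N)) (T : 'M['Z_d]_2),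
      (1 < d)%N -> (0 < N)%N ->
      isotropic (gspan ws) -> symplectic S -> symplectic T ->
      correlates T S ws w /\ (prime d -> marginal_is_mixture T S ws w)) /\
  (* continuous case: coordinates in the reals *)
  (forall (R : realType) (N : nat) (ws : seq 'cV[R]_(2 * N)) (w : 'cV[R]_(2 * N))
          (S : 'M[R]_(2 * N)) (T : 'M[R]_2),
      (0 < N)%N ->
      isotropic (gspan ws) -> symplectic S -> symplectic T ->
      correlates T S ws w /\ marginal_is_mixture T S ws w).
Proof.
split.
- move=> d N ws w S T hd hN _ hS hT; split; first exact: corr.
  by move=> hp; apply: marg => //; apply: Zp_field.
- move=> R N ws w S T hN _ hS hT; split; first exact: corr.
  by apply: marg => // x hx; rewrite unitfE.
Qed.
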